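(* Let $L$ and $R$ be nonempty subsets of a group $G$ with $G=\mathcal{W}(\bar{L})\mathcal{W}(\bar{R})$, and let $k$ be the minimum weak connection length in $G$ relative to $(L,R)$. If $k$ is infinite, then $2\mathrm{S}(G;L,R)$ has infinitely many weakly connected components. If $k$ is finite, then $2\mathrm{S}(G;L,R)$ has exactly $k$ weakly connected components, and all of them have the same number of vertices (the same cardinality). Moreover, if $k$ is finite and $L\cap N_G(L)\neq\emptyset$ or $R\cap N_G(R)\neq\emptyset$, then all weakly connected components are isomorphic as digraphs.
   Context: For nonempty subsets $L,R$ of a group $G$, the two-sided group digraph $2\mathrm{S}(G;L,R)$ has vertex set $G$ and a directed arc $(g,h)$ if and only if $h=l^{-1}gr$ for some $l\in L$, $r\in R$. Write $\bar{L}=L\cup L^{-1}$, $\bar{R}=R\cup R^{-1}$; for nonempty $S$, $\mathcal{W}(S)$ is the set of elements expressible as finite products $s_1\cdots s_n$, $n\ge1$, $s_i\in S$, and $AB=\{ab:a\in A,b\in B\}$. Vertex $g$ is weakly connected to $h$, written $g\sim h$, if there is a sequence $g=g_0,\dots,g_n=h$ such that for each $i$ either $(g_{i-1},g_i)$ or $(g_i,g_{i-1})$ is an arc. The minimum weak connection length in $G$ relative to $(L,R)$ is the minimum positive length $k$ of a word $s_1\cdots s_k$ whose letters all lie in $L$, or all lie in $L^{-1}$, or all lie in $R$, or all lie in $R^{-1}$, and whose value is weakly connected to $e$; it is infinite if no such word exists. $N_G(L)=\{g\in G: g^{-1}Lg=L\}$ is the normalizer of the subset $L$. *)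

(* Defs.v *)
From Stdlib Require Import List Arith Relations.
Import ListNotations.

Record group := Group {
  carrier :> Type;
  mul : carrier -> carrier -> carrier;
  one : carrier;
  inv : carrier -> carrier;
  mulA : forall x y z, mul x (mul y z) = mul (mul x y) z;
  mul1g : forall x, mul one x = x;
  mulg1 : forall x, mul x one = x;
  mulVg : forall x, mul (inv x) x = one;
  mulgV : forall x, mul x (inv x) = one
}.

Section Defs.
Variable G : group.
Implicit Types (L R S : G -> Prop) (g h x : G).

Definition lprod (s : list G) : G := fold_right (@mul G) (one G) s.

Definition setV S : G -> Prop := fun x => S (inv G x).
Definition setbar S : G -> Prop := fun x => S x \/ S (inv G x).

Definition Wgen S : G -> Prop :=
  fun x => exists s : list G, s <> [] /\ Forall S s /\ lprod s = x.

Definition arc L R g h : Prop :=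
  exists l r, L l /\ R r /\ h = mul G (mul G (inv G l) g) r.

Definition weak L R : G -> G -> Prop :=
  clos_refl_trans G (fun x y => arc L R x y \/ arc L R y x).

Definition word_in S (k : nat) x : Prop :=
  exists s : list G, length s = k /\ Forall S s /\ lprod s = x.

Definition is_conn_len L R (k : nat) : Prop :=
  1 <= k /\ exists x,
    (word_in L k x \/ word_in (setV L) k x \/ word_in R k x \/ word_in (setV R) k x)
    /\ weak L R x (one G).

Definition min_conn_len L R (k : nat) : Prop :=
  is_conn_len L R k /\ forall j, is_conn_len L R j -> k <= j.

Definition conn_len_infinite L R : Prop := forall j, ~ is_conn_len L R j.

Definition normalizes L g : Prop :=
  forall x, (exists l, L l /\ x = mul G (mul G (inv G g) l) g) <-> L x.

End Defs.

Arguments lprod {G}. Arguments setV {G}. Arguments setbar {G}. Arguments Wgen {G}.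
Arguments arc {G}. Arguments weak {G}. Arguments word_in {G}.
Arguments is_conn_len {G}. Arguments min_conn_len {G}. Arguments conn_len_infinite {G}.
Arguments normalizes {G}.

(* Main.v *)
Require Import Defs.
From Stdlib Require Import List Arith Relations Lia ProofIrrelevance.
Import ListNotations.

Infix "**" := (mul _) (at level 40, left associativity).

Lemma invK {G : group} (x : G) : inv G (inv G x) = x.
Proof.
  rewrite <- (mulg1 G (inv G (inv G x))), <- (mulVg G x), mulA, mulVg, mul1g. reflexivity.
Qed.
Lemma mulKg {G : group} (x y : G) : inv G x ** (x ** y) = y.
Proof. rewrite mulA, mulVg, mul1g. reflexivity. Qed.
Lemma mulKVg {G : group} (x y : G) : x ** (inv G x ** y) = y.
Proof. rewrite mulA, mulgV, mul1g. reflexivity. Qed.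
Ltac gs := repeat rewrite <- mulA;
  repeat (rewrite ?invK, ?mulKg, ?mulKVg, ?mulVg, ?mulgV, ?mul1g, ?mulg1).
Lemma invM {G : group} (x y : G) : inv G (x ** y) = inv G y ** inv G x.
Proof.
  assert (E: (x**y) ** (inv G y ** inv G x) = one G) by (gs; reflexivity).
  rewrite <- (mulg1 G (inv G (x**y))), <- E, mulA, mulVg, mul1g. reflexivity.
Qed.
Fixpoint npow {G : group} (x : G) (n : nat) : G :=
  match n with 0 => one G | S n => x ** npow x n end.

Lemma npow_Sr {G : group} (x : G) n : npow x (S n) = npow x n ** x.
Proof. induction n. simpl. gs. reflexivity.
  change (npow x (S (S n))) with (x ** npow x (S n)). rewrite IHn at 1. rewrite mulA. reflexivity. Qed.

Lemma npow_add {G : group} (x : G) m n : npow x (m + n) = npow x m ** npow x n.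
Proof. induction m; simpl. gs; reflexivity. rewrite IHm. gs. reflexivity. Qed.

Lemma npow_can {G : group} (x : G) n : npow (inv G x) n ** npow x n = one G.
Proof. induction n. simpl. gs. reflexivity.
  change (npow (inv G x) (S n)) with (inv G x ** npow (inv G x) n). rewrite (npow_Sr x n). gs.
  rewrite (mulA _ (npow (inv G x) n)), IHn, mul1g, mulVg. reflexivity. Qed.
Lemma npow_can2 {G : group} (x : G) n : npow x n ** npow (inv G x) n = one G.
Proof. rewrite <- (invK x) at 1. apply npow_can. Qed.
Lemma npow_canr {G : group} (x y : G) n : npow (inv G x) n ** (npow x n ** y) = y.
Proof. rewrite mulA, npow_can, mul1g. reflexivity. Qed.
Lemma npow_can2r {G : group} (x y : G) n : npow x n ** (npow (inv G x) n ** y) = y.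
Proof. rewrite mulA, npow_can2, mul1g. reflexivity. Qed.

Lemma lprod_repeat {G : group} (x : G) n : lprod (repeat x n) = npow x n.
Proof. induction n; simpl; auto. unfold lprod in *. simpl. rewrite IHn. reflexivity. Qed.

Lemma weak_refl {G : group} (L R : G -> Prop) a : weak L R a a.
Proof. apply rt_refl. Qed.
Lemma weak_sym {G : group} (L R : G -> Prop) a b : weak L R a b -> weak L R b a.
Proof. intro H; induction H. apply rt_step; tauto. apply rt_refl. eapply rt_trans; eauto. Qed.
Lemma weak_trans {G : group} (L R : G -> Prop) a b c : weak L R a b -> weak L R b c -> weak L R a c.
Proof. apply rt_trans. Qed.
Lemma weak_arc {G : group} (L R : G -> Prop) a b : arc L R a b -> weak L R a b.
Proof. intro; apply rt_step; tauto. Qed.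
Lemma weak_arcV {G : group} (L R : G -> Prop) a b : arc L R b a -> weak L R a b.
Proof. intro; apply rt_step; tauto. Qed.
Lemma mkarc {G : group} {L R : G -> Prop} l r g h : L l -> R r -> h = inv G l ** g ** r -> arc L R g h.
Proof. intros; exists l, r; auto. Qed.
Lemma weak_map {G : group} (L R : G -> Prop) (F : G -> G) :
  (forall a b, arc L R a b -> weak L R (F a) (F b)) -> forall a b, weak L R a b -> weak L R (F a) (F b).
Proof. intros H a b Hab; induction Hab as [x y [Hxy|Hxy]| |]. auto. apply weak_sym; auto.
  apply weak_refl. eapply weak_trans; eauto. Qed.

Definition pres {G : group} (L R : G -> Prop) (u : G) :=
  forall a b, weak L R a b -> weak L R (u ** a) (u ** b).
Lemma pres_one {G : group} (L R : G -> Prop) : pres L R (one G).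
Proof. intros a b; rewrite !mul1g; auto. Qed.
Lemma pres_mul {G : group} (L R : G -> Prop) u v : pres L R u -> pres L R v -> pres L R (u ** v).
Proof. intros Hu Hv a b H. rewrite <- !mulA. auto. Qed.
Lemma pres_npow {G : group} (L R : G -> Prop) u n : pres L R u -> pres L R (npow u n).
Proof. intro; induction n; simpl. apply pres_one. apply pres_mul; auto. Qed.

Lemma pres_l0 {G : group} (L R : G -> Prop) l0 r0 : L l0 -> R r0 -> pres L R l0.
Proof. intros Hl Hr. unfold pres. apply weak_map. intros a b [l [r [Hl' [Hr' ->]]]].
  apply weak_trans with (a ** r).
  apply weak_arc. apply (mkarc l0 r); auto. gs. reflexivity.
  apply weak_trans with (inv G l ** a ** r ** r0).
  apply weak_arc. apply (mkarc l r0); auto. gs. reflexivity.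
  apply weak_arcV. apply (mkarc l0 r0); auto. gs. reflexivity.
Qed.
Lemma pres_l0V {G : group} (L R : G -> Prop) l0 r0 : L l0 -> R r0 -> pres L R (inv G l0).
Proof. intros Hl Hr. unfold pres. apply weak_map. intros a b [l [r [Hl' [Hr' ->]]]].
  apply weak_trans with (a ** inv G r0).
  apply weak_arcV. apply (mkarc l0 r0); auto. gs. reflexivity.
  apply weak_trans with (inv G l ** a).
  apply weak_arc. apply (mkarc l r0); auto. gs. reflexivity.
  apply weak_arc. apply (mkarc l0 r); auto. gs. reflexivity.
Qed.
Lemma Lx {G : group} (L R : G -> Prop) l0 r0 x y : L l0 -> R r0 -> L x -> weak L R (x ** y) (l0 ** y).
Proof. intros. apply weak_trans with (y ** r0).
  apply weak_arc. apply (mkarc x r0); auto. gs. reflexivity.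
  apply weak_arcV. apply (mkarc l0 r0); auto. gs. reflexivity. Qed.
Lemma LVx {G : group} (L R : G -> Prop) l0 r0 x y : L l0 -> R r0 -> L (inv G x) -> weak L R (x ** y) (inv G l0 ** y).
Proof. intros. apply weak_trans with (y ** inv G r0).
  apply weak_arcV. apply (mkarc (inv G x) r0); auto. gs. reflexivity.
  apply weak_arc. apply (mkarc l0 r0); auto. gs. reflexivity. Qed.
Lemma Ry {G : group} (L R : G -> Prop) l0 x y : L l0 -> R x -> weak L R (y ** x) (l0 ** y).
Proof. intros. apply weak_arcV. apply (mkarc l0 x); auto. gs. reflexivity. Qed.
Lemma RVy {G : group} (L R : G -> Prop) l0 x y : L l0 -> R (inv G x) -> weak L R (y ** x) (inv G l0 ** y).
Proof. intros. apply weak_arc. apply (mkarc l0 (inv G x)); auto. gs. reflexivity. Qed.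


Lemma wordL {G : group} (L R : G -> Prop) l0 r0 n x : L l0 -> R r0 ->
  word_in L n x -> weak L R x (npow l0 n).
Proof. intros Hl Hr [s [<- [Hs <-]]]. induction Hs as [|y s Hy Hs IH]. apply weak_refl.
  simpl. change (lprod (y :: s)) with (y ** lprod s).
  apply weak_trans with (l0 ** lprod s). apply (Lx L R l0 r0); auto.
  apply (pres_l0 L R l0 r0); auto. Qed.
Lemma wordLV {G : group} (L R : G -> Prop) l0 r0 n x : L l0 -> R r0 ->
  word_in (setV L) n x -> weak L R x (npow (inv G l0) n).
Proof. intros Hl Hr [s [<- [Hs <-]]]. induction Hs as [|y s Hy Hs IH]. apply weak_refl.
  simpl. change (lprod (y :: s)) with (y ** lprod s).
  apply weak_trans with (inv G l0 ** lprod s). apply (LVx L R l0 r0); auto.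
  apply (pres_l0V L R l0 r0); auto. Qed.
Lemma wordR {G : group} (L R : G -> Prop) l0 r0 n x : L l0 -> R r0 ->
  word_in R n x -> weak L R x (npow l0 n).
Proof. intros Hl Hr [s [<- [Hs <-]]].
  assert (forall y, weak L R (y ** lprod s) (npow l0 (length s) ** y)).
  { induction Hs as [|z s Hz Hs IH]; intro y. simpl. unfold lprod; simpl. gs. apply weak_refl.
    change (lprod (z :: s)) with (z ** lprod s). rewrite mulA.
    apply weak_trans with (npow l0 (length s) ** (y ** z)). apply IH.
    apply weak_trans with (npow l0 (length s) ** (l0 ** y)).
    apply (pres_npow L R l0 _ (pres_l0 L R l0 r0 Hl Hr)). apply Ry; auto.
    simpl length. rewrite npow_Sr, mulA. apply weak_refl. }
  specialize (H (one G)). rewrite mul1g, mulg1 in H. exact H. Qed.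
Lemma wordRV {G : group} (L R : G -> Prop) l0 r0 n x : L l0 -> R r0 ->
  word_in (setV R) n x -> weak L R x (npow (inv G l0) n).
Proof. intros Hl Hr [s [<- [Hs <-]]].
  assert (forall y, weak L R (y ** lprod s) (npow (inv G l0) (length s) ** y)).
  { induction Hs as [|z s Hz Hs IH]; intro y. simpl. unfold lprod; simpl. gs. apply weak_refl.
    change (lprod (z :: s)) with (z ** lprod s). rewrite mulA.
    apply weak_trans with (npow (inv G l0) (length s) ** (y ** z)). apply IH.
    apply weak_trans with (npow (inv G l0) (length s) ** (inv G l0 ** y)).
    apply (pres_npow L R _ _ (pres_l0V L R l0 r0 Hl Hr)). apply RVy; auto.
    simpl length. rewrite npow_Sr, mulA. apply weak_refl. }
  specialize (H (one G)). rewrite mul1g, mulg1 in H. exact H. Qed.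

Lemma conn_k {G : group} (L R : G -> Prop) l0 r0 k : L l0 -> R r0 ->
  is_conn_len L R k -> weak L R (npow l0 k) (one G).
Proof. intros Hl Hr [_ [x [Hw Hx]]].
  assert (HV : weak L R (npow (inv G l0) k) (one G) -> weak L R (npow l0 k) (one G)).
  { intro H. apply (pres_npow L R l0 k (pres_l0 L R l0 r0 Hl Hr)) in H.
    rewrite npow_can2, mulg1 in H. apply weak_sym; auto. }
  destruct Hw as [H|[H|[H|H]]].
  - eapply weak_trans. apply weak_sym. eapply wordL; eauto. auto.
  - apply HV. eapply weak_trans. apply weak_sym. eapply wordLV; eauto. auto.
  - eapply weak_trans. apply weak_sym. eapply wordR; eauto. auto.
  - apply HV. eapply weak_trans. apply weak_sym. eapply wordRV; eauto. auto.
Qed.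

Lemma sep {G : group} (L R : G -> Prop) l0 r0 i j : L l0 -> R r0 -> i < j ->
  weak L R (npow l0 i) (npow l0 j) -> is_conn_len L R (j - i).
Proof. intros Hl Hr Hij H.
  apply (pres_npow L R _ i (pres_l0V L R l0 r0 Hl Hr)) in H.
  replace j with (i + (j - i)) in H by lia. rewrite npow_add, npow_canr, npow_can in H.
  split. lia. exists (npow l0 (j - i)). split. left. exists (repeat l0 (j - i)).
  split. apply repeat_length. split. apply Forall_forall. intros x Hx.
  apply repeat_spec in Hx. subst; auto. apply lprod_repeat. apply weak_sym; auto. Qed.

Lemma V_all {G : group} (L R : G -> Prop) l0 r0 k : L l0 -> R r0 -> 1 <= k ->
  (forall g : G, exists a b, Wgen (setbar L) a /\ Wgen (setbar R) b /\ g = a ** b) ->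
  weak L R (npow l0 k) (one G) ->
  forall g, exists i, i < k /\ weak L R g (npow l0 i).
Proof. intros Hl Hr Hk hG HK.
  set (V := fun g => exists i, i < k /\ weak L R g (npow l0 i)).
  assert (Vw : forall g g', weak L R g g' -> V g' -> V g).
  { intros g g' H [i [Hi H']]. exists i; split; auto. eapply weak_trans; eauto. }
  assert (Vl : forall g, V g -> V (l0 ** g)).
  { intros g [i [Hi H]]. apply (pres_l0 L R l0 r0 Hl Hr) in H.
    destruct (Nat.eq_dec (S i) k).
    - exists 0. split. lia. eapply weak_trans. apply H. change (l0 ** npow l0 i) with (npow l0 (S i)).
      subst; auto.
    - exists (S i). split. lia. auto. }
  assert (VlV : forall g, V g -> V (inv G l0 ** g)).
  { intros g [i [Hi H]]. apply (pres_l0V L R l0 r0 Hl Hr) in H.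
    destruct i as [|i].
    - exists (k - 1). split. lia. eapply weak_trans. apply H.
      apply weak_sym. apply (pres_l0V L R l0 r0 Hl Hr) in HK.
      replace k with (S (k - 1)) in HK by lia. simpl in HK. rewrite mulKg in HK. auto.
    - exists i. split. lia. simpl in H. rewrite mulKg in H. auto. }
  assert (V1 : V (one G)). { exists 0. split. lia. apply weak_refl. }
  intro g. destruct (hG g) as [a [b [[sa [_ [Ha <-]]] [[sb [_ [Hb <-]]] ->]]]].
  assert (HB : forall y, V y -> V (y ** lprod sb)).
  { induction Hb as [|x s Hx Hs IH]; intros y Hy. unfold lprod; simpl. rewrite mulg1; auto.
    change (lprod (x :: s)) with (x ** lprod s). rewrite mulA. apply IH.
    destruct Hx as [Hx|Hx].
    - eapply Vw. apply (Ry L R l0); auto. auto.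
    - eapply Vw. apply (RVy L R l0); auto. auto. }
  assert (HA : forall z, V z -> V (lprod sa ** z)).
  { induction Ha as [|x s Hx Hs IH]; intros z Hz. unfold lprod; simpl. rewrite mul1g; auto.
    change (lprod (x :: s)) with (x ** lprod s). rewrite <- mulA.
    destruct Hx as [Hx|Hx].
    - eapply Vw. apply (Lx L R l0 r0); auto. auto.
    - eapply Vw. apply (LVx L R l0 r0); auto. auto. }
  apply HA. specialize (HB (one G) V1). rewrite mul1g in HB. auto.
Qed.


Definition presLA {G : group} (L R : G -> Prop) (u : G) :=
  forall x y, arc L R x y <-> arc L R (u ** x) (u ** y).
Definition presRA {G : group} (L R : G -> Prop) (u : G) :=
  forall x y, arc L R x y <-> arc L R (x ** u) (y ** u).

Lemma presLA_norm {G : group} (L R : G -> Prop) l1 : normalizes L l1 -> presLA L R l1.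
Proof. intros Hn x y. split.
  - intros [l [r [Hl [Hr ->]]]]. destruct (proj2 (Hn l) Hl) as [l' [Hl' ->]].
    apply (mkarc l' r); auto. rewrite !invM. gs. reflexivity.
  - intros [l' [r [Hl' [Hr E]]]].
    assert (Hl : L (inv G l1 ** l' ** l1)) by (apply Hn; eauto).
    apply (mkarc _ r _ _ Hl Hr). rewrite <- (mulKg l1 y), E. rewrite !invM. gs. reflexivity.
Qed.
Lemma presRA_norm {G : group} (L R : G -> Prop) r1 : normalizes R r1 -> presRA L R r1.
Proof. intros Hn x y. split.
  - intros [l [r [Hl [Hr ->]]]].
    assert (Hr' : R (inv G r1 ** r ** r1)) by (apply Hn; eauto).
    apply (mkarc l _ _ _ Hl Hr'). gs. reflexivity.
  - intros [l [r' [Hl [Hr' E]]]]. destruct (proj2 (Hn r') Hr') as [r [Hr ->]].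
    apply (mkarc l r _ _ Hl Hr).
    assert (E2 : y = y ** r1 ** inv G r1) by (gs; reflexivity).
    rewrite E2, E. gs. reflexivity.
Qed.
Lemma presLA_one {G : group} (L R : G -> Prop) : presLA L R (one G).
Proof. intros x y. rewrite !mul1g. tauto. Qed.
Lemma presLA_mul {G : group} (L R : G -> Prop) u v : presLA L R u -> presLA L R v -> presLA L R (u ** v).
Proof. intros Hu Hv x y. rewrite <- !mulA. rewrite (Hv x y), (Hu (v ** x) (v ** y)). tauto. Qed.
Lemma presLA_npow {G : group} (L R : G -> Prop) u n : presLA L R u -> presLA L R (npow u n).
Proof. intro; induction n; simpl. apply presLA_one. apply presLA_mul; auto. Qed.
Lemma presLA_inv {G : group} (L R : G -> Prop) u : presLA L R u -> presLA L R (inv G u).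
Proof. intros H x y. rewrite (H (inv G u ** x)). rewrite !mulKVg. tauto. Qed.
Lemma presRA_one {G : group} (L R : G -> Prop) : presRA L R (one G).
Proof. intros x y. rewrite !mulg1. tauto. Qed.
Lemma presRA_mul {G : group} (L R : G -> Prop) u v : presRA L R u -> presRA L R v -> presRA L R (u ** v).
Proof. intros Hu Hv x y. rewrite !mulA. rewrite (Hu x y), (Hv (x ** u) (y ** u)). tauto. Qed.
Lemma presRA_npow {G : group} (L R : G -> Prop) u n : presRA L R u -> presRA L R (npow u n).
Proof. intro; induction n; simpl. apply presRA_one. apply presRA_mul; auto. Qed.
Lemma presRA_inv {G : group} (L R : G -> Prop) u : presRA L R u -> presRA L R (inv G u).
Proof. intros H x y. rewrite (H (x ** inv G u)). rewrite <- !mulA, !mulVg, !mulg1. tauto. Qed.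

Lemma mk_bij {G : group} (L R : G -> Prop) (g h : G) (F F' : G -> G) :
  (forall x, weak L R g x -> weak L R h (F x)) ->
  (forall y, weak L R h y -> weak L R g (F' y)) ->
  (forall x, F' (F x) = x) -> (forall y, F (F' y) = y) ->
  exists (f : {x : G | weak L R g x} -> {x : G | weak L R h x})
         (f' : {x : G | weak L R h x} -> {x : G | weak L R g x}),
    (forall x, f' (f x) = x) /\ (forall y, f (f' y) = y) /\
    (forall x, proj1_sig (f x) = F (proj1_sig x)).
Proof. intros H1 H2 E1 E2.
  exists (fun x => exist _ (F (proj1_sig x)) (H1 _ (proj2_sig x))).
  exists (fun y => exist _ (F' (proj1_sig y)) (H2 _ (proj2_sig y))).
  split; [|split].
  - intros [x p]. apply subset_eq_compat. simpl. auto.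
  - intros [x p]. apply subset_eq_compat. simpl. auto.
  - reflexivity.
Qed.

Lemma left_bij {G : group} (L R : G -> Prop) l0 r0 k : L l0 -> R r0 -> 1 <= k ->
  (forall g : G, exists a b, Wgen (setbar L) a /\ Wgen (setbar R) b /\ g = a ** b) ->
  weak L R (npow l0 k) (one G) -> forall g h,
  exists F F' : G -> G,
  (forall x, weak L R g x -> weak L R h (F x)) /\
  (forall y, weak L R h y -> weak L R g (F' y)) /\
  (forall x, F' (F x) = x) /\ (forall y, F (F' y) = y) /\
  (normalizes L l0 -> forall x y, arc L R x y <-> arc L R (F x) (F y)).
Proof. intros Hl Hr Hk hG HK g h.
  destruct (V_all L R l0 r0 k Hl Hr Hk hG HK g) as [i [_ Hg]].
  destruct (V_all L R l0 r0 k Hl Hr Hk hG HK h) as [j [_ Hh]].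
  assert (P : forall n, pres L R (npow l0 n)) by (intro; apply pres_npow; eapply pres_l0; eauto).
  assert (PV : forall n, pres L R (npow (inv G l0) n)) by (intro; apply pres_npow; eapply pres_l0V; eauto).
  assert (key : forall g h i j, weak L R g (npow l0 i) -> weak L R h (npow l0 j) ->
     forall x, weak L R g x -> weak L R h (npow l0 j ** npow (inv G l0) i ** x)).
  { clear g h i j Hg Hh. intros g h i j Hg Hh x Hx.
    eapply weak_trans. apply Hh.
    replace (npow l0 j) with (npow l0 j ** npow (inv G l0) i ** npow l0 i) at 1
      by (rewrite <- mulA, npow_can, mulg1; reflexivity).
    apply pres_mul; auto. eapply weak_trans. apply weak_sym, Hg. auto. }
  exists (fun x => npow l0 j ** npow (inv G l0) i ** x).
  exists (fun y => npow l0 i ** npow (inv G l0) j ** y).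
  split; [|split; [|split; [|split]]].
  - apply key; auto.
  - apply key; auto.
  - intro x. rewrite <- !mulA. rewrite npow_canr, npow_can2r. reflexivity.
  - intro x. rewrite <- !mulA. rewrite npow_canr, npow_can2r. reflexivity.
  - intros Hn. apply presLA_mul; apply presLA_npow; auto.
    apply presLA_norm; auto. apply presLA_inv, presLA_norm; auto.
Qed.

Lemma l0r1 {G : group} (L R : G -> Prop) l0 r1 i : L l0 -> R r1 ->
  weak L R (npow l0 i) (npow r1 i).
Proof. intros Hl Hr. induction i. apply weak_refl.
  simpl. eapply weak_trans. apply (pres_l0 L R l0 r1 Hl Hr). apply IHi.
  change (r1 ** npow r1 i) with (npow r1 (S i)). rewrite npow_Sr. apply weak_sym. apply Ry; auto. Qed.

Lemma right_bij {G : group} (L R : G -> Prop) l0 r1 k : L l0 -> R r1 -> 1 <= k ->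
  (forall g : G, exists a b, Wgen (setbar L) a /\ Wgen (setbar R) b /\ g = a ** b) ->
  weak L R (npow l0 k) (one G) -> normalizes R r1 -> forall g h,
  exists F F' : G -> G,
  (forall x, weak L R g x -> weak L R h (F x)) /\
  (forall y, weak L R h y -> weak L R g (F' y)) /\
  (forall x, F' (F x) = x) /\ (forall y, F (F' y) = y) /\
  (forall x y, arc L R x y <-> arc L R (F x) (F y)).
Proof. intros Hl Hr Hk hG HK Hn g h.
  destruct (V_all L R l0 r1 k Hl Hr Hk hG HK g) as [i [_ Hg]].
  destruct (V_all L R l0 r1 k Hl Hr Hk hG HK h) as [j [_ Hh]].
  pose proof (weak_trans L R _ _ _ Hg (l0r1 L R l0 r1 i Hl Hr)) as Hg'.
  pose proof (weak_trans L R _ _ _ Hh (l0r1 L R l0 r1 j Hl Hr)) as Hh'. clear Hg Hh.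
  assert (PA : forall n m, presRA L R (npow (inv G r1) n ** npow r1 m)).
  { intros. apply presRA_mul; apply presRA_npow. apply presRA_inv, presRA_norm; auto.
    apply presRA_norm; auto. }
  assert (P : forall n m a b, weak L R a b -> weak L R (a ** (npow (inv G r1) n ** npow r1 m))
                                                  (b ** (npow (inv G r1) n ** npow r1 m))).
  { intros n m. apply weak_map. intros a b Hab. apply weak_arc. apply PA; auto. }
  assert (key : forall g h i j, weak L R g (npow r1 i) -> weak L R h (npow r1 j) ->
     forall x, weak L R g x -> weak L R h (x ** (npow (inv G r1) i ** npow r1 j))).
  { clear g h i j Hg' Hh'. intros g h i j Hg Hh x Hx.
    eapply weak_trans. apply Hh.
    replace (npow r1 j) with (npow r1 i ** (npow (inv G r1) i ** npow r1 j)) at 1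
      by (rewrite npow_can2r; reflexivity).
    apply P. eapply weak_trans. apply weak_sym, Hg. auto. }
  exists (fun x => x ** (npow (inv G r1) i ** npow r1 j)).
  exists (fun y => y ** (npow (inv G r1) j ** npow r1 i)).
  split; [|split; [|split; [|split]]].
  - apply key; auto.
  - apply key; auto.
  - intro x. rewrite <- !mulA. rewrite npow_can2r, npow_can. rewrite mulg1. reflexivity.
  - intro x. rewrite <- !mulA. rewrite npow_can2r, npow_can. rewrite mulg1. reflexivity.
  - apply PA.
Qed.


Lemma finish {G : group} (L R : G -> Prop) g h (F F' : G -> G) :
  (forall x, weak L R g x -> weak L R h (F x)) ->
  (forall y, weak L R h y -> weak L R g (F' y)) ->
  (forall x, F' (F x) = x) -> (forall y, F (F' y) = y) ->
  (forall x y, arc L R x y <-> arc L R (F x) (F y)) ->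
  exists (f : {x : G | weak L R g x} -> {x : G | weak L R h x})
         (f' : {x : G | weak L R h x} -> {x : G | weak L R g x}),
        (forall x, f' (f x) = x) /\ (forall y, f (f' y) = y) /\
        (forall x y, arc L R (proj1_sig x) (proj1_sig y) <->
                     arc L R (proj1_sig (f x)) (proj1_sig (f y))).
Proof. intros H1 H2 E1 E2 HA. destruct (mk_bij L R g h F F' H1 H2 E1 E2) as [f [f' [A [B C]]]].
  exists f, f'. split; auto. split; auto. intros x y. rewrite !C. apply HA. Qed.

Theorem mainTheorem9 (G : group) (L R : G -> Prop)
  (hL : exists l, L l) (hR : exists r, R r)
  (hG : forall g : G, exists a b, Wgen (setbar L) a /\ Wgen (setbar R) b /\ g = mul G a b) :
  (conn_len_infinite L R ->
     exists c : nat -> G, forall i j, weak L R (c i) (c j) -> i = j)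
  /\
  (forall k, min_conn_len L R k ->
     (exists c : nat -> G,
        (forall i j, i < k -> j < k -> weak L R (c i) (c j) -> i = j) /\
        (forall g : G, exists i, i < k /\ weak L R g (c i)))
     /\
     (forall g h : G, exists (f : {x : G | weak L R g x} -> {x : G | weak L R h x})
                             (f' : {x : G | weak L R h x} -> {x : G | weak L R g x}),
        (forall x, f' (f x) = x) /\ (forall y, f (f' y) = y))
     /\
     ((exists l, L l /\ normalizes L l) \/ (exists r, R r /\ normalizes R r) ->
      forall g h : G, exists (f : {x : G | weak L R g x} -> {x : G | weak L R h x})
                             (f' : {x : G | weak L R h x} -> {x : G | weak L R g x}),
        (forall x, f' (f x) = x) /\ (forall y, f (f' y) = y) /\
        (forall x y, arc L R (proj1_sig x) (proj1_sig y) <->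
                     arc L R (proj1_sig (f x)) (proj1_sig (f y))))).
Proof.
  destruct hL as [l0 Hl0]. destruct hR as [r0 Hr0]. split.
  - intros Hinf. exists (npow l0). intros i j H.
    destruct (lt_eq_lt_dec i j) as [[Hij|Hij]|Hij]; auto.
    + exfalso. apply (Hinf (j - i)). eapply sep; eauto.
    + exfalso. apply (Hinf (i - j)). eapply sep; eauto. apply weak_sym; auto.
  - intros k [Hk Hmin]. assert (Hk1 : 1 <= k) by apply Hk.
    pose proof (conn_k L R l0 r0 k Hl0 Hr0 Hk) as HK.
    split; [|split].
    + exists (npow l0). split.
      * intros i j Hi Hj H. destruct (lt_eq_lt_dec i j) as [[Hij|Hij]|Hij]; auto.
        -- exfalso. specialize (Hmin (j - i) (sep L R l0 r0 i j Hl0 Hr0 Hij H)). lia.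
        -- exfalso. specialize (Hmin (i - j) (sep L R l0 r0 j i Hl0 Hr0 Hij (weak_sym _ _ _ _ H))). lia.
      * apply (V_all L R l0 r0 k); auto.
    + intros g h. destruct (left_bij L R l0 r0 k Hl0 Hr0 Hk1 hG HK g h) as [F [F' [A [B [C [D _]]]]]].
      destruct (mk_bij L R g h F F' A B C D) as [f [f' [X [Y _]]]]. exists f, f'; auto.
    + intros [[l1 [Hl1 Hn]] | [r1 [Hr1 Hn]]] g h.
      * pose proof (conn_k L R l1 r0 k Hl1 Hr0 Hk) as HK1.
        destruct (left_bij L R l1 r0 k Hl1 Hr0 Hk1 hG HK1 g h) as [F [F' [A [B [C [D E]]]]]].
        apply (finish L R g h F F'); auto.
      * destruct (right_bij L R l0 r1 k Hl0 Hr1 Hk1 hG HK Hn g h) as [F [F' [A [B [C [D E]]]]]].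
        apply (finish L R g h F F'); auto.
Qed.
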